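(* Consider the ordered streaming model for trees without vertex moves (defined in the context). For every drawing algorithm in this model there exist a tree with $n$ edges and an order of arrival of its edges (together with the rotation information) for which the algorithm's drawing requires area $\Omega(2^{n/2})$.
   Context: Ordered streaming model: a connected graph $G$ (here a tree) is revealed one edge at a time; at all times the revealed graph is connected and edges never disappear. Together with each new edge $e$ the algorithm is told the position of $e$ in the clockwise cyclic order of the edges incident to each of its endpoints (among the edges incident to that endpoint). Upon arrival, $e$ must immediately be incorporated into a planar straight-line drawing of the current graph in which every vertex is placed at a grid point (integer coordinates), consistent with the given clockwise orders. ''Without vertex moves'' means that once a vertex has been placed, its position never changes. The area of a drawing is the area of the smallest axis-parallel bounding box of the grid points used. *)

(* Defs.v *)
From Stdlib Require Import Reals List ZArith Lia.
Import ListNotations.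
Open Scope R_scope.

(** Vertices are named by their
  order of arrival: the first edge (index 0) joins vertices 0 and 1; edge
  number k (k >= 1) joins the already present vertex [p] to the new vertex
  [k+1], where [nth k s = (p, w)].  Since the revealed graph is a connected
  tree, every new edge has exactly one new endpoint, which is a leaf, so the
  clockwise-order information at the new endpoint is trivial.  The order
  information at [p] is encoded by [w]: a current neighbour of [p] such that,
  in the clockwise order around [p] among the edges currently incident to [p],
  the new edge comes immediately after the edge [p w].  For step 0 the
  (dummy) step is required to be (0,0). *)

Definition step := (nat * nat)%type.

Definition src (s : list step) (j : nat) : nat := fst (nth j s (0%nat, 0%nat)).
Definition refn (s : list step) (j : nat) : nat := snd (nth j s (0%nat, 0%nat)).

Definition adj_before (s : list step) (k p q : nat) : Prop :=
  exists j, (j < k)%nat /\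
    ((src s j = p /\ S j = q) \/ (src s j = q /\ S j = p)).

Definition valid_input (s : list step) : Prop :=
  forall k, (k < length s)%nat ->
    if Nat.eqb k 0 then src s k = 0%nat /\ refn s k = 0%nat
    else (src s k <= k)%nat /\ adj_before s k (src s k) (refn s k).

(** A (deterministic) algorithm maps the prefix of the stream seen so far to the
  grid point of the newly arrived vertex: [alg (firstn i s)] is the position of
  vertex i (vertex 0 is placed without any information, together with vertex 1
  on arrival of the first edge).  Positions, once chosen, never change. *)

Definition point := (Z * Z)%type.
Definition algorithm := list step -> point.

Definition pos (alg : algorithm) (s : list step) (i : nat) : point :=
  alg (firstn i s).

Definition toR (a : point) : R * R := (IZR (fst a), IZR (snd a)).

Definition on_seg (a b : point) (x : R * R) : Prop :=
  exists t : R, 0 <= t <= 1 /\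
    fst x = IZR (fst a) + t * (IZR (fst b) - IZR (fst a)) /\
    snd x = IZR (snd a) + t * (IZR (snd b) - IZR (snd a)).

Definition planar_drawing (s : list step) (P : nat -> point) : Prop :=
  let m := length s in
  (forall i j, (i <= m)%nat -> (j <= m)%nat -> P i = P j -> i = j) /\
  (forall j c, (j < m)%nat -> (c <= m)%nat -> c <> src s j -> c <> S j ->
     ~ on_seg (P (src s j)) (P (S j)) (toR (P c))) /\
  (forall j1 j2, (j1 < m)%nat -> (j2 < m)%nat -> j1 <> j2 ->
     forall x : R * R,
       on_seg (P (src s j1)) (P (S j1)) x ->
       on_seg (P (src s j2)) (P (S j2)) x ->
       exists u, (u = src s j1 \/ u = S j1) /\ (u = src s j2 \/ u = S j2)
                 /\ x = toR (P u)).

(** Angular order of nonzero integer direction vectors, counterclockwise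
    starting from the positive x-axis (y axis pointing up). *)
Definition vsub (a b : point) : point := (fst a - fst b, snd a - snd b)%Z.
Definition cross (a b : point) : Z := (fst a * snd b - snd a * fst b)%Z.
Definition upper (d : point) : Prop :=
  (0 < snd d)%Z \/ (snd d = 0%Z /\ (0 < fst d)%Z).
Definition ang_lt (a b : point) : Prop :=
  (upper a /\ ~ upper b) \/ ((upper a <-> upper b) /\ (0 < cross a b)%Z).
Definition ccw_cyclic (a b c : point) : Prop :=
  (ang_lt a b /\ ang_lt b c) \/ (ang_lt b c /\ ang_lt c a) \/
  (ang_lt c a /\ ang_lt a b).

(** Consistency of the drawing with the clockwise order information of the
    last step k = length s - 1 (k >= 1): with (p, w) the k-th step and
    v = k+1 the new vertex, the edge p v comes immediately after p w in the
    clockwise order around p, i.e. no other current neighbour q of p is met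
    strictly between them when turning counterclockwise from p v to p w. *)
Definition rotation_ok (s : list step) (P : nat -> point) : Prop :=
  let k := (length s - 1)%nat in
  let p := src s k in
  let w := refn s k in
  let v := S k in
  let dir x := vsub (P x) (P p) in
  forall q, q <> w -> adj_before s k p q -> ~ ccw_cyclic (dir v) (dir q) (dir w).

(** An algorithm in the model: on every admissible stream, after every edge
    arrival (= on every admissible prefix) the current drawing is a planar
    straight-line grid drawing consistent with the given clockwise orders. *)
Definition valid_algorithm (alg : algorithm) : Prop :=
  forall s, valid_input s ->
    planar_drawing s (pos alg s) /\
    ((2 <= length s)%nat -> rotation_ok s (pos alg s)).

Definition zmax (l : list Z) (d : Z) : Z := fold_left Z.max l d.
Definition zmin (l : list Z) (d : Z) : Z := fold_left Z.min l d.

Definition drawing_area (alg : algorithm) (s : list step) : Z :=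
  let P := pos alg s in
  let vs := seq 0 (S (length s)) in
  let xs := map (fun i => fst (P i)) vs in
  let ys := map (fun i => snd (P i)) vs in
  ((zmax xs (fst (P 0%nat)) - zmin xs (fst (P 0%nat))) *
   (zmax ys (snd (P 0%nat)) - zmin ys (snd (P 0%nat))))%Z.

(* Main.v *)
Require Import Defs.
From Stdlib Require Import Reals List ZArith.
From Stdlib Require Import Lia Psatz Bool Classical.
Import ListNotations.
Open Scope R_scope.

Lemma upper_dec (d : point) : {upper d} + {~ upper d}.
Proof. unfold upper. destruct (Z_lt_dec 0 (snd d)); [left; auto|].
destruct (Z.eq_dec (snd d) 0); [destruct (Z_lt_dec 0 (fst d))|]; 
  [left; auto| right; intros [H|[H1 H2]]; lia | right; intros [H|[H1 H2]]; lia].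
Qed.

Lemma cross_tr_upper (a b c : point) :
  upper a -> upper b -> upper c -> (0 < cross a b)%Z -> (0 < cross b c)%Z -> (0 < cross a c)%Z.
Proof.
  destruct a as [a1 a2], b as [b1 b2], c as [c1 c2]; unfold upper, cross; simpl.
  intros Ha Hb Hc H1 H2.
  assert (E1 : ((a1*b2-a2*b1)*c2 + (b1*c2-b2*c1)*a2 + (c1*a2-c2*a1)*b2 = 0)%Z) by ring.
  assert (E2 : ((a1*b2-a2*b1)*c1 + (b1*c2-b2*c1)*a1 + (c1*a2-c2*a1)*b1 = 0)%Z) by ring.
  destruct Hb as [Hb|[Hb0 Hb1]].
  - destruct (Z_lt_dec 0 (a1*c2-a2*c1)) as [|Hn]; [assumption|exfalso].
    destruct Ha as [Ha|[Ha0 Ha1]].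
    + assert (0 <= c2)%Z by lia. nia.
    + subst a2. destruct Hc as [Hc|[Hc0 Hc1]]; [nia|]. subst c2.
      nia.
  - subst b2. destruct Ha as [Ha|[Ha0 Ha1]]; nia.
Qed.

Definition vneg (a : point) : point := (- fst a, - snd a)%Z.

Lemma cross_neg a b : cross (vneg a) (vneg b) = cross a b.
Proof. unfold cross, vneg; simpl; ring. Qed.

Lemma upper_neg a : a <> (0,0)%Z -> ~ upper a -> upper (vneg a).
Proof. destruct a as [a1 a2]; unfold upper, vneg; simpl; intros H H1.
  destruct (Z_lt_dec a2 0); [left; lia|]. right. split; [lia|].
  destruct (Z.eq_dec a1 0); [subst; exfalso; apply H; f_equal; lia|].
  destruct (Z_lt_dec 0 a1); [exfalso; apply H1; right; lia| lia]. Qed.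

Lemma cross_zero_l a : cross (0,0)%Z a = 0%Z.
Proof. unfold cross; simpl; ring. Qed.
Lemma cross_zero_r a : cross a (0,0)%Z = 0%Z.
Proof. unfold cross; simpl; ring. Qed.

Lemma ang_lt_irrefl a : ~ ang_lt a a.
Proof. unfold ang_lt, cross. intros [[H1 H2]|[_ H]]; [tauto|lia]. Qed.

Lemma ang_lt_trans a b c : ang_lt a b -> ang_lt b c -> ang_lt a c.
Proof.
  unfold ang_lt. intros Hab Hbc.
  destruct Hab as [[Ha Hb]|[Eab Cab]].
  - left. split; auto. destruct Hbc as [[Hb' _]|[E _]]; tauto.
  - destruct Hbc as [[Hb Hc]|[Ebc Cbc]].
    + left. tauto.
    + right. split; [tauto|].
      destruct (upper_dec b) as [Ub|Ub].
      * apply cross_tr_upper with b; tauto.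
      * assert (na : a <> (0,0)%Z) by (intro; subst; rewrite cross_zero_l in Cab; lia).
        assert (nb : b <> (0,0)%Z) by (intro; subst; rewrite cross_zero_l in Cbc; lia).
        assert (nc : c <> (0,0)%Z) by (intro; subst; rewrite cross_zero_r in Cbc; lia).
        rewrite <- cross_neg. apply cross_tr_upper with (vneg b);
        try apply upper_neg; try tauto; rewrite cross_neg; auto.
Qed.

Section Cyc.
Variable A : Type.
Variable lt : A -> A -> Prop.
Hypothesis irr : forall a, ~ lt a a.
Hypothesis tr : forall a b c, lt a b -> lt b c -> lt a c.
Definition cyc a b c := (lt a b /\ lt b c) \/ (lt b c /\ lt c a) \/ (lt c a /\ lt a b).

Ltac contr := match goal with
 | H1 : lt ?a ?a |- _ => exfalso; exact (irr a H1)
 | H1 : lt ?a ?b, H2 : lt ?b ?a |- _ => exfalso; exact (irr a (tr _ _ _ H1 H2))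
 | H1 : lt ?a ?b, H2 : lt ?b ?c, H3 : lt ?c ?a |- _ => exfalso; exact (irr a (tr _ _ _ H1 (tr _ _ _ H2 H3)))
 | H1 : lt ?a ?b, H2 : lt ?b ?c, H3 : lt ?c ?d, H4 : lt ?d ?a |- _ => exfalso; exact (irr a (tr _ _ _ H1 (tr _ _ _ H2 (tr _ _ _ H3 H4))))
 end.
Ltac fin := first [ contr | (left; split; eauto; fail) | (right; left; split; eauto; fail) | (right; right; split; eauto; fail) | (left; eauto; fail) | (right; eauto; fail) ].
Ltac solve_cyc := unfold cyc in *; intros; repeat match goal with H : _ /\ _ |- _ => destruct H | H : _ \/ _ |- _ => destruct H end; fin.

Lemma cyc_L1 x z v y : cyc x z v -> cyc x v y -> cyc x z y.
Proof. solve_cyc. Qed.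
Lemma cyc_L2 x z v y : cyc v z y -> cyc x v y -> cyc x z y.
Proof. solve_cyc. Qed.
Lemma cyc_L3 x z v y : cyc x v y -> cyc x z v -> cyc v z y -> False.
Proof. solve_cyc. Qed.
Lemma cyc_L4 x v : cyc x v v -> False.
Proof. solve_cyc. Qed.
Lemma cyc_L4' v y : cyc v v y -> False.
Proof. solve_cyc. Qed.
Lemma cyc_rot a b c : (lt a b \/ lt b a) -> (lt b c \/ lt c b) -> (lt a c \/ lt c a) ->
  ~ cyc a b c -> cyc b a c.
Proof. unfold cyc; intros H1 H2 H3 H4. 
  destruct H1; destruct H2; destruct H3; try fin; exfalso; apply H4; fin. Qed.
Lemma cyc_comp a b c : cyc a b c -> lt a c \/ lt c a.
Proof. solve_cyc. Qed.
End Cyc.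


Definition dot (a b : point) : Z := (fst a * fst b + snd a * snd b)%Z.
Definition nrm (a : point) : Z := dot a a.

Lemma dot_pos a b : a <> (0,0)%Z -> b <> (0,0)%Z -> (upper a <-> upper b) -> cross a b = 0%Z -> (0 < dot a b)%Z.
Proof.
  destruct a as [a1 a2], b as [b1 b2]; unfold upper, cross, dot; simpl. intros na nb E C.
  assert (na' : a1 <> 0%Z \/ a2 <> 0%Z) by (destruct (Z.eq_dec a1 0), (Z.eq_dec a2 0); subst; auto; congruence).
  assert (nb' : b1 <> 0%Z \/ b2 <> 0%Z) by (destruct (Z.eq_dec b1 0), (Z.eq_dec b2 0); subst; auto; congruence).
  destruct (Z_lt_dec 0 a2) as [Ha|Ha].
  - assert (Hb : (0 < b2)%Z \/ (b2 = 0 /\ 0 < b1)%Z) by tauto.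
    destruct Hb as [Hb|[Hb0 Hb1]]; [|subst; nia].
    assert (E0 : (a1*b2 = a2*b1)%Z) by lia.
    assert (E' : (b2*(a1*b1+a2*b2) = a2*(b1*b1+b2*b2))%Z) by (transitivity (b1*(a1*b2) + a2*b2*b2)%Z; [ring| rewrite E0; ring]).
    assert (0 <= b1*b1)%Z by nia. assert (0 < b2*b2)%Z by nia. nia.
  - destruct (Z_lt_dec a2 0) as [Ha'|Ha'].
    + assert (Hb : ~ ((0 < b2)%Z \/ (b2 = 0 /\ 0 < b1)%Z)) by (intro Hb; apply E in Hb; lia).
      destruct (Z_lt_dec b2 0); [|assert (b2 = 0)%Z by lia; subst; nia].
      assert (E0 : (a1*b2 = a2*b1)%Z) by lia.
    assert (E' : (b2*(a1*b1+a2*b2) = a2*(b1*b1+b2*b2))%Z) by (transitivity (b1*(a1*b2) + a2*b2*b2)%Z; [ring| rewrite E0; ring]).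
      assert (0 <= b1*b1)%Z by nia. assert (0 < b2*b2)%Z by nia. nia.
    + assert (a2 = 0)%Z by lia. subst a2.
      destruct (Z_lt_dec 0 a1).
      * assert (Hb : (0 < b2)%Z \/ (b2 = 0 /\ 0 < b1)%Z) by tauto.
        destruct Hb as [Hb|[Hb0 Hb1]]; nia.
      * assert (a1 < 0)%Z by lia.
        assert (Hb : ~ ((0 < b2)%Z \/ (b2 = 0 /\ 0 < b1)%Z)) by (intro Hb; apply E in Hb; lia).
        nia.
Qed.

Lemma on_seg_par (p0 pa pb : point) :
  let a := vsub pa p0 in let b := vsub pb p0 in
  cross a b = 0%Z -> (0 < dot a b)%Z -> (dot a b <= nrm b)%Z ->
  on_seg p0 pb (toR pa).
Proof.
  destruct p0 as [x0 y0], pa as [xa ya], pb as [xb yb]; unfold vsub, cross, dot, nrm, on_seg, toR; simpl.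
  intros C D1 D2. unfold dot in D2; simpl in D2.
  set (d := ((xa - x0) * (xb - x0) + (ya - y0) * (yb - y0))%Z) in *.
  set (nb := ((xb - x0) * (xb - x0) + (yb - y0) * (yb - y0))%Z) in *.
  assert (E1 : ((xa - x0) * nb = d * (xb - x0))%Z).
  { unfold d, nb. transitivity ((xa - x0) * (xb - x0) * (xb - x0) + (yb - y0) * ((xa - x0) * (yb - y0)))%Z; [ring|].
    replace ((xa - x0) * (yb - y0))%Z with ((ya - y0) * (xb - x0))%Z by lia. ring. }
  assert (E2 : ((ya - y0) * nb = d * (yb - y0))%Z).
  { unfold d, nb. transitivity ((ya - y0) * (yb - y0) * (yb - y0) + (xb - x0) * ((ya - y0) * (xb - x0)))%Z; [ring|].
    replace ((ya - y0) * (xb - x0))%Z with ((xa - x0) * (yb - y0))%Z by lia. ring. }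
  assert (Hnb : (0 < nb)%Z) by lia.
  exists (IZR d / IZR nb). split; [split|split].
  - apply Rmult_le_pos; [apply IZR_le; lia| left; apply Rinv_0_lt_compat; apply IZR_lt; lia].
  - apply Rmult_le_reg_r with (IZR nb); [apply IZR_lt; lia|].
    unfold Rdiv. rewrite Rmult_assoc, Rinv_l, Rmult_1_r, Rmult_1_l; [apply IZR_le; lia|].
    apply not_0_IZR; lia.
  - apply IZR_eq in E1. rewrite !mult_IZR, !minus_IZR in E1.
    assert (IZR nb <> 0) by (apply not_0_IZR; lia).
    apply Rmult_eq_reg_r with (IZR nb); auto. field_simplify; auto. nra.
  - apply IZR_eq in E2. rewrite !mult_IZR, !minus_IZR in E2.
    assert (IZR nb <> 0) by (apply not_0_IZR; lia).
    apply Rmult_eq_reg_r with (IZR nb); auto. field_simplify; auto. nra.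
Qed.


Definition Dv (P : nat -> point) (i : nat) : point := vsub (P i) (P 0%nat).
Definition star (s : list step) := forall j, (j < length s)%nat -> src s j = 0%nat.

Lemma lagrange a b : (dot a b * dot a b + cross a b * cross a b = nrm a * nrm b)%Z.
Proof. destruct a, b; unfold dot, cross, nrm, dot; simpl; ring. Qed.

Lemma cross_anti a b : cross b a = (- cross a b)%Z.
Proof. destruct a, b; unfold cross; simpl; ring. Qed.
Lemma dot_sym a b : dot b a = dot a b.
Proof. destruct a, b; unfold dot; simpl; ring. Qed.

Lemma vsub_nz (p q : point) : p <> q -> vsub p q <> (0,0)%Z.
Proof. destruct p, q; unfold vsub; simpl; intros H E; injection E; intros; apply H; f_equal; lia. Qed.

Lemma par_seg s P i j : planar_drawing s P -> star s -> (1 <= i <= length s)%nat -> (1 <= j <= length s)%nat -> i <> j ->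
  cross (Dv P i) (Dv P j) = 0%Z -> (0 < dot (Dv P i) (Dv P j))%Z -> (nrm (Dv P i) <= nrm (Dv P j))%Z -> False.
Proof.
  intros [H1 [H2 H3]] Hs Hi Hj Hij C Dp N.
  assert (Hd : (dot (Dv P i) (Dv P j) <= nrm (Dv P j))%Z).
  { pose proof (lagrange (Dv P i) (Dv P j)) as L. rewrite C in L.
    assert (0 <= nrm (Dv P i))%Z by (unfold nrm, dot; nia). nia. }
  apply (H2 (pred j) i); try lia.
  - rewrite Hs by lia. lia.
  - replace (S (pred j)) with j by lia. rewrite Hs by lia. apply on_seg_par; auto.
Qed.

Lemma comp_star s P i j : planar_drawing s P -> star s -> (1 <= i <= length s)%nat -> (1 <= j <= length s)%nat -> i <> j ->
  ang_lt (Dv P i) (Dv P j) \/ ang_lt (Dv P j) (Dv P i).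
Proof.
  intros HP Hs Hi Hj Hij.
  assert (nz : forall k, (1 <= k <= length s)%nat -> Dv P k <> (0,0)%Z).
  { intros k Hk. apply vsub_nz. intro E. destruct HP as [H1 _]. apply H1 in E; lia. }
  destruct (classic (ang_lt (Dv P i) (Dv P j))) as [|n1]; [auto|].
  destruct (classic (ang_lt (Dv P j) (Dv P i))) as [|n2]; [auto|].
  exfalso. unfold ang_lt in n1, n2.
  assert (E : upper (Dv P i) <-> upper (Dv P j)).
  { destruct (upper_dec (Dv P i)), (upper_dec (Dv P j)); tauto. }
  assert (C : cross (Dv P i) (Dv P j) = 0%Z).
  { rewrite cross_anti in n2. destruct (Z.lt_trichotomy (cross (Dv P i) (Dv P j)) 0) as [c|[c|c]]; auto.
    - exfalso; apply n2; right; split; [tauto| lia].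
    - exfalso; apply n1; right; split; [tauto| lia]. }
  pose proof (dot_pos _ _ (nz i Hi) (nz j Hj) E C) as Dp.
  destruct (Z.le_ge_cases (nrm (Dv P i)) (nrm (Dv P j))).
  - eapply (par_seg s P i j); eauto.
  - eapply (par_seg s P j i); eauto. rewrite cross_anti, C; auto. rewrite dot_sym; auto; lia.
Qed.


Lemma ang_lt_dec a b : {ang_lt a b} + {~ ang_lt a b}.
Proof. unfold ang_lt. destruct (upper_dec a), (upper_dec b), (Z_lt_dec 0 (cross a b)); tauto. Qed.

Lemma ccw_dec a b c : {ccw_cyclic a b c} + {~ ccw_cyclic a b c}.
Proof. unfold ccw_cyclic. destruct (ang_lt_dec a b), (ang_lt_dec b c), (ang_lt_dec c a); tauto. Qed.

Lemma ccw_cyc a b c : ccw_cyclic a b c <-> cyc point ang_lt a b c.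
Proof. reflexivity. Qed.

Definition cb (P : Prop) (d : {P} + {~P}) : nat := if d then 1%nat else 0%nat.

Fixpoint cntl (l : list point) (f : point -> nat) : nat :=
  match l with [] => 0%nat | z :: l => (f z + cntl l f)%nat end.

Definition pt_eq_dec (a b : point) : {a = b} + {a <> b}.
Proof. decide equality; apply Z.eq_dec. Defined.
Definition cnt (l : list point) (X Y : point) : nat := cntl l (fun Z => cb _ (ccw_dec X Z Y)).

Lemma cntl_le l f g h k : (forall z, (f z + g z + h z <= k z)%nat) -> (cntl l f + cntl l g + cntl l h <= cntl l k)%nat.
Proof. induction l; simpl; intros H; [lia|]. specialize (IHl H). specialize (H a). lia. Qed.

Lemma cntl_in l V : In V l -> (1 <= cntl l (fun Z => cb _ (pt_eq_dec Z V)))%nat.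
Proof. induction l; simpl; [tauto|]. intros [->|H]; [destruct (pt_eq_dec V V); simpl; [lia|congruence]|].
  specialize (IHl H); lia. Qed.

Lemma cntl_bound l f : (forall z, (f z <= 1)%nat) -> (cntl l f <= length l)%nat.
Proof. induction l; simpl; intros H; [lia|]. specialize (IHl H). specialize (H a). lia. Qed.

Lemma cnt_split l X V Y : ccw_cyclic X V Y -> In V l -> (cnt l X V + cnt l V Y + 1 <= cnt l X Y)%nat.
Proof.
  intros H HV. pose proof (cntl_in l V HV).
  assert (cntl l (fun Z => cb _ (ccw_dec X Z V)) + cntl l (fun Z => cb _ (ccw_dec V Z Y)) +
          cntl l (fun Z => cb _ (pt_eq_dec Z V)) <= cnt l X Y)%nat; [|unfold cnt in *; lia].
  apply cntl_le. intros z. unfold cb.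
  pose proof (cyc_L1 point ang_lt ang_lt_irrefl ang_lt_trans X z V Y) as L1.
  pose proof (cyc_L2 point ang_lt ang_lt_irrefl ang_lt_trans X z V Y) as L2.
  pose proof (cyc_L3 point ang_lt ang_lt_irrefl ang_lt_trans X z V Y) as L3.
  pose proof (cyc_L4 point ang_lt ang_lt_irrefl ang_lt_trans X V) as L4.
  pose proof (cyc_L4' point ang_lt ang_lt_irrefl ang_lt_trans V Y) as L4'.
  destruct (ccw_dec X z V), (ccw_dec V z Y), (pt_eq_dec z V), (ccw_dec X z Y); subst;
    rewrite ?ccw_cyc in *; try tauto; lia.
Qed.

Lemma cnt_le1 l X Y : (cnt l X Y <= length l)%nat.
Proof. apply cntl_bound. intros z; unfold cb; destruct ccw_dec; lia. Qed.

Lemma cnt_pos l X V Y : ccw_cyclic X V Y -> In V l -> (1 <= cnt l X Y)%nat.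
Proof. intros H HV. induction l; simpl in *; [tauto|]. destruct HV as [->|HV].
  - unfold cnt; simpl; unfold cb at 1; destruct ccw_dec; [lia|tauto].
  - specialize (IHl HV). unfold cnt in *; simpl; lia. Qed.

Definition zrange (B : Z) : list Z := map (fun k => (Z.of_nat k - B)%Z) (seq 0 (Z.to_nat (2*B+1))).
Definition box (B : Z) : list point := list_prod (zrange B) (zrange B).

Lemma in_zrange B z : (- B <= z <= B)%Z -> In z (zrange B).
Proof. intros H. unfold zrange. apply in_map_iff. exists (Z.to_nat (z + B)). split; [lia|].
  apply in_seq. lia. Qed.

Lemma in_box B (p : point) : (- B <= fst p <= B)%Z -> (- B <= snd p <= B)%Z -> In p (box B).
Proof. destruct p; simpl; intros; apply in_prod; apply in_zrange; auto. Qed.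

Lemma box_len B : length (box B) = (Z.to_nat (2*B+1) * Z.to_nat (2*B+1))%nat.
Proof. unfold box. etransitivity; [apply List.length_prod|]. unfold zrange. rewrite length_map, length_seq. reflexivity. Qed.


Definition good (s : list step) : Prop :=
  forall k, (k < length s)%nat -> src s k = 0%nat /\ (k = 0%nat -> refn s k = 0%nat) /\
     (k <> 0%nat -> (1 <= refn s k <= k)%nat).

Lemma good_valid s : good s -> valid_input s.
Proof.
  intros G k Hk. destruct (G k Hk) as [H1 [H2 H3]].
  destruct (Nat.eqb_spec k 0) as [E|E]; [auto|].
  split; [lia|]. specialize (H3 E). exists (pred (refn s k)). split; [lia|].
  rewrite H1. left. split. apply G; lia. lia. 
Qed.

Lemma good_star s : good s -> star s.
Proof. intros G j Hj; apply G; auto. Qed.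

Lemma nth_app_last (s : list step) a k d : k = length s -> nth k (s ++ [a]) d = a.
Proof. intros ->. rewrite app_nth2 by lia. rewrite Nat.sub_diag. reflexivity. Qed.

Lemma nth_app_pre (s : list step) a k d : (k < length s)%nat -> nth k (s ++ [a]) d = nth k s d.
Proof. intros H. rewrite app_nth1 by lia. reflexivity. Qed.

Lemma good_snoc s y : good s -> (1 <= length s)%nat -> (1 <= y <= length s)%nat -> good (s ++ [(0%nat, y)]).
Proof.
  intros G L Hy k Hk. rewrite length_app in Hk; simpl in Hk.
  unfold src, refn. destruct (Nat.eq_dec k (length s)) as [->|Ne].
  - rewrite nth_app_last by auto. simpl. lia.
  - rewrite nth_app_pre by lia. apply G; lia.
Qed.

Section Adv.
Variable alg : algorithm.
Variable B : Z.

Fixpoint adv (m : nat) : list step * nat * nat :=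
  match m with
  | O => ([(0%nat,0%nat); (0%nat,1%nat)], 1%nat, 2%nat)
  | S m' => let r := adv m' in
            let s' := fst (fst r) ++ [(0%nat, snd r)] in
            let v := length s' in
            let P := Defs.pos alg s' in
            if Nat.leb (cnt (box B) (Dv P (snd (fst r))) (Dv P v)) (cnt (box B) (Dv P v) (Dv P (snd r)))
            then (s', snd (fst r), v) else (s', v, snd r)
  end.

Definition sq m := fst (fst (adv m)).
Definition xx m := snd (fst (adv m)).
Definition yy m := snd (adv m).

Lemma sq_S m : sq (S m) = sq m ++ [(0%nat, yy m)].
Proof. unfold sq, yy; simpl. destruct Nat.leb; reflexivity. Qed.

Lemma inv m : length (sq m) = (m + 2)%nat /\ good (sq m) /\ (1 <= xx m <= m + 2)%nat /\
   (1 <= yy m <= m + 2)%nat /\ xx m <> yy m.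
Proof.
  induction m as [|m IH].
  - unfold sq, xx, yy; simpl. repeat split; try lia.
    all: simpl in *; unfold src, refn; destruct k as [|[|k]]; simpl; lia.
  - destruct IH as [L [G [Hx [Hy Hxy]]]].
    assert (Ls : length (sq (S m)) = (S m + 2)%nat) by (rewrite sq_S, length_app; simpl; lia).
    split; [auto|]. split. { rewrite sq_S. apply good_snoc; auto; lia. }
    unfold xx, yy, sq in *; simpl. destruct Nat.leb; simpl; rewrite length_app; simpl; lia.
Qed.

Lemma sq_prefix m M : (m <= M)%nat -> exists t, sq M = sq m ++ t.
Proof.
  induction 1 as [|M H IH]. exists []. rewrite app_nil_r; auto.
  destruct IH as [t Ht]. exists (t ++ [(0%nat, yy M)]). rewrite sq_S, Ht, app_assoc; auto.
Qed.

Lemma pos_prefix s t i : (i <= length s)%nat -> Defs.pos alg (s ++ t) i = Defs.pos alg s i.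
Proof. intros H. unfold Defs.pos. rewrite firstn_app. replace (i - length s)%nat with 0%nat by lia.
  simpl. rewrite app_nil_r; auto. Qed.

Hypothesis Valg : valid_algorithm alg.

Lemma rot_step m : ccw_cyclic (Dv (Defs.pos alg (sq (S m))) (xx m)) (Dv (Defs.pos alg (sq (S m))) (m+3))
                              (Dv (Defs.pos alg (sq (S m))) (yy m)).
Proof.
  destruct (inv m) as [L [G [Hx [Hy Hxy]]]].
  destruct (inv (S m)) as [L' [G' _]].
  set (P := Defs.pos alg (sq (S m))).
  destruct (Valg (sq (S m)) (good_valid _ G')) as [Hpl Hrot].
  assert (Hrot' := Hrot ltac:(lia)). unfold rotation_ok in Hrot'.
  rewrite L' in Hrot'. cbv zeta in Hrot'.
  replace (S m + 2 - 1)%nat with (m + 2)%nat in Hrot' by lia.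
  assert (Nl : nth (m+2) (sq (S m)) (0%nat,0%nat) = (0%nat, yy m)).
  { rewrite sq_S. apply nth_app_last. lia. }
  unfold src, refn in Hrot'. rewrite Nl in Hrot'. simpl in Hrot'.
  assert (Hq := Hrot' (xx m) Hxy).
  assert (Ha : adj_before (sq (S m)) (m + 2) 0 (xx m)).
  { exists (pred (xx m)). split; [lia|]. left. split; [|lia]. apply G'. lia. }
  specialize (Hq Ha). fold P in Hq.
  replace (S (m+2)) with (m+3)%nat in Hq by lia.
  assert (St := good_star _ G').
  apply (cyc_rot point ang_lt ang_lt_irrefl ang_lt_trans); [| | |exact Hq];
    apply (comp_star (sq (S m))); auto; lia.
Qed.
End Adv.


Section Chain.
Variable alg : algorithm.
Variable B : Z.
Hypothesis Valg : valid_algorithm alg.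
Variable M : nat.
Let Q := Defs.pos alg (sq alg B M).
Hypothesis Hbox : forall i, (i <= M + 2)%nat -> In (Dv Q i) (box B).

Lemma adv_S m : let Ps := Defs.pos alg (sq alg B m ++ [(0%nat, yy alg B m)]) in
  let X := Dv Ps (xx alg B m) in let V := Dv Ps (m+3) in let Y := Dv Ps (yy alg B m) in
  (xx alg B (S m) = xx alg B m /\ yy alg B (S m) = (m+3)%nat /\ (cnt (box B) X V <= cnt (box B) V Y)%nat) \/
  (xx alg B (S m) = (m+3)%nat /\ yy alg B (S m) = yy alg B m /\ (cnt (box B) V Y < cnt (box B) X V)%nat).
Proof.
  destruct (inv alg B m) as [L _].
  assert (E : length (sq alg B m ++ [(0%nat, yy alg B m)]) = (m+3)%nat) by (rewrite length_app; simpl; lia).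
  unfold sq, xx, yy in *. simpl. rewrite E.
  destruct Nat.leb eqn:Eb; simpl.
  - left. apply Nat.leb_le in Eb. auto.
  - right. apply Nat.leb_gt in Eb. auto.
Qed.

Lemma DvQ m i : (m <= M)%nat -> (i <= m + 2)%nat -> Dv (Defs.pos alg (sq alg B m)) i = Dv Q i.
Proof.
  intros H Hi. destruct (sq_prefix alg B m M H) as [t Ht]. destruct (inv alg B m) as [L _].
  unfold Q. rewrite Ht. unfold Dv. rewrite !pos_prefix by lia. reflexivity.
Qed.

Definition cc m := cnt (box B) (Dv Q (xx alg B m)) (Dv Q (yy alg B m)).

Lemma step_ineq m : (m < M)%nat -> (1 <= cc m /\ 2 * cc (S m) + 1 <= cc m)%nat.
Proof.
  intros Hm. destruct (inv alg B m) as [L [G [Hx [Hy Hxy]]]].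
  pose proof (rot_step alg B Valg m) as R.
  pose proof (adv_S m) as A. cbv zeta in A. rewrite <- sq_S in A.
  rewrite !(DvQ (S m)) in R, A by lia.
  assert (HV : In (Dv Q (m+3)) (box B)) by (apply Hbox; lia).
  pose proof (cnt_split (box B) _ _ _ R HV).
  pose proof (cnt_pos (box B) _ _ _ R HV).
  unfold cc. destruct A as [[-> [-> C]]|[-> [-> C]]]; lia.
Qed.

Lemma chain k m : (M - m = S k)%nat -> (2 ^ (S k) <= cc m + 1)%nat.
Proof.
  revert m. induction k as [|k IH]; intros m Hk.
  - destruct (step_ineq m ltac:(lia)). simpl. lia.
  - destruct (step_ineq m ltac:(lia)). specialize (IH (S m) ltac:(lia)).
    rewrite Nat.pow_succ_r'. lia.
Qed.

Lemma final_bound : (1 <= M)%nat -> (2 ^ M <= length (box B) + 1)%nat.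
Proof.
  intros H. pose proof (chain (pred M) 0 ltac:(lia)) as C. replace (S (pred M)) with M in C by lia.
  pose proof (cnt_le1 (box B) (Dv Q (xx alg B 0)) (Dv Q (yy alg B 0))). unfold cc in C. lia.
Qed.
End Chain.


Lemma zmax_ge l d : (d <= zmax l d)%Z /\ forall x, In x l -> (x <= zmax l d)%Z.
Proof.
  unfold zmax. revert d. induction l as [|a l IH]; intros d; simpl.
  - split; [lia| tauto].
  - destruct (IH (Z.max d a)) as [H1 H2]. split; [lia|].
    intros x [->|Hx]; [lia| auto].
Qed.

Lemma zmin_le l d : (zmin l d <= d)%Z /\ forall x, In x l -> (zmin l d <= x)%Z.
Proof.
  unfold zmin. revert d. induction l as [|a l IH]; intros d; simpl.
  - split; [lia| tauto].
  - destruct (IH (Z.min d a)) as [H1 H2]. split; [lia|].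
    intros x [->|Hx]; [lia| auto].
Qed.

Lemma range_bound (f : nat -> Z) n i : (i <= n)%nat ->
  let l := map f (seq 0 (S n)) in
  (Z.abs (f i - f 0%nat) <= zmax l (f 0%nat) - zmin l (f 0%nat))%Z.
Proof.
  intros Hi l. destruct (zmax_ge l (f 0%nat)) as [A1 A2]. destruct (zmin_le l (f 0%nat)) as [B1 B2].
  assert (In (f i) l) by (apply in_map; apply in_seq; lia).
  specialize (A2 _ H). specialize (B2 _ H). lia.
Qed.

Lemma cross0_lt a b : cross a b = 0%Z -> ang_lt a b -> upper a /\ ~ upper b.
Proof. unfold ang_lt. intros C [H|[_ H]]; [auto| lia]. Qed.

Lemma three_contra a b c : cross a b = 0%Z -> cross b c = 0%Z -> cross a c = 0%Z ->
  (ang_lt a b \/ ang_lt b a) -> (ang_lt b c \/ ang_lt c b) -> (ang_lt a c \/ ang_lt c a) -> False.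
Proof.
  intros C1 C2 C3 H1 H2 H3.
  assert (D1 : cross b a = 0%Z) by (rewrite cross_anti; lia).
  assert (D2 : cross c b = 0%Z) by (rewrite cross_anti; lia).
  assert (D3 : cross c a = 0%Z) by (rewrite cross_anti; lia).
  destruct H1 as [H1|H1]; [apply (cross0_lt _ _ C1) in H1| apply (cross0_lt _ _ D1) in H1];
  (destruct H2 as [H2|H2]; [apply (cross0_lt _ _ C2) in H2| apply (cross0_lt _ _ D2) in H2]);
  (destruct H3 as [H3|H3]; [apply (cross0_lt _ _ C3) in H3| apply (cross0_lt _ _ D3) in H3]); tauto.
Qed.


Lemma cross_fst0 a b : fst a = 0%Z -> fst b = 0%Z -> cross a b = 0%Z.
Proof. destruct a, b; unfold cross; simpl; intros -> ->; ring. Qed.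
Lemma cross_snd0 a b : snd a = 0%Z -> snd b = 0%Z -> cross a b = 0%Z.
Proof. destruct a, b; unfold cross; simpl; intros -> ->; ring. Qed.

Lemma area_box alg s B : planar_drawing s (Defs.pos alg s) -> star s -> (3 <= length s)%nat ->
  (drawing_area alg s <= B)%Z -> forall i, (i <= length s)%nat -> In (Dv (Defs.pos alg s) i) (box B).
Proof.
  intros HP Hs L3 HA.
  set (P := Defs.pos alg s) in *.
  set (n := length s) in *.
  unfold drawing_area in HA. fold P in HA. fold n in HA.
  set (w := (zmax (map (fun i => fst (P i)) (seq 0 (S n))) (fst (P 0%nat)) -
             zmin (map (fun i => fst (P i)) (seq 0 (S n))) (fst (P 0%nat)))%Z) in *.
  set (h := (zmax (map (fun i => snd (P i)) (seq 0 (S n))) (snd (P 0%nat)) -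
             zmin (map (fun i => snd (P i)) (seq 0 (S n))) (snd (P 0%nat)))%Z) in *.
  assert (Hx : forall i, (i <= n)%nat -> (Z.abs (fst (P i) - fst (P 0%nat)) <= w)%Z).
  { intros i Hi. exact (range_bound (fun i => fst (P i)) n i Hi). }
  assert (Hy : forall i, (i <= n)%nat -> (Z.abs (snd (P i) - snd (P 0%nat)) <= h)%Z).
  { intros i Hi. exact (range_bound (fun i => snd (P i)) n i Hi). }
  assert (C12 := comp_star s P 1 2 HP Hs ltac:(lia) ltac:(lia) ltac:(lia)).
  assert (C23 := comp_star s P 2 3 HP Hs ltac:(lia) ltac:(lia) ltac:(lia)).
  assert (C13 := comp_star s P 1 3 HP Hs ltac:(lia) ltac:(lia) ltac:(lia)).
  assert (W : (1 <= w)%Z).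
  { destruct (Z_le_dec 1 w) as [|Hw]; auto. exfalso.
    assert (F : forall i, (i <= n)%nat -> fst (Dv P i) = 0%Z).
    { intros i Hi. specialize (Hx i Hi). unfold Dv, vsub; simpl. lia. }
    apply (three_contra _ _ _ (cross_fst0 _ _ (F 1%nat ltac:(lia)) (F 2%nat ltac:(lia)))
      (cross_fst0 _ _ (F 2%nat ltac:(lia)) (F 3%nat ltac:(lia)))
      (cross_fst0 _ _ (F 1%nat ltac:(lia)) (F 3%nat ltac:(lia))) C12 C23 C13). }
  assert (Hh : (1 <= h)%Z).
  { destruct (Z_le_dec 1 h) as [|Hw]; auto. exfalso.
    assert (F : forall i, (i <= n)%nat -> snd (Dv P i) = 0%Z).
    { intros i Hi. specialize (Hy i Hi). unfold Dv, vsub; simpl. lia. }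
    apply (three_contra _ _ _ (cross_snd0 _ _ (F 1%nat ltac:(lia)) (F 2%nat ltac:(lia)))
      (cross_snd0 _ _ (F 2%nat ltac:(lia)) (F 3%nat ltac:(lia)))
      (cross_snd0 _ _ (F 1%nat ltac:(lia)) (F 3%nat ltac:(lia))) C12 C23 C13). }
  assert (w <= B)%Z by nia. assert (h <= B)%Z by nia.
  intros i Hi. apply in_box; unfold Dv, vsub; simpl.
  - specialize (Hx i Hi). lia.
  - specialize (Hy i Hi). lia.
Qed.


Theorem theorem1 :
  exists c : R, 0 < c /\
  exists n0 : nat,
  forall alg : algorithm, valid_algorithm alg ->
  forall n : nat, (n0 <= n)%nat ->
  exists s : list step,
    valid_input s /\ length s = n /\
    c * Rpower 2 (INR n / 2) <= IZR (drawing_area alg s).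
Proof.
  exists (/16). split; [lra|]. exists 9%nat. intros alg Valg n Hn.
  set (k := Nat.div2 (n - 7)).
  assert (Hk : (2 * k <= n - 7 <= 2 * k + 1)%nat).
  { pose proof (Nat.div2_odd (n - 7)) as E. fold k in E. destruct (Nat.odd (n-7)); simpl in E; lia. }
  set (B := Z.of_nat (2 ^ k)).
  set (M := (n - 2)%nat).
  exists (sq alg B M). destruct (inv alg B M) as [L [G _]].
  split; [apply good_valid; auto|]. split; [lia|].
  assert (HA : (B < drawing_area alg (sq alg B M))%Z).
  { destruct (Z_lt_dec B (drawing_area alg (sq alg B M))) as [|Hn']; auto. exfalso.
    destruct (Valg _ (good_valid _ G)) as [HP _].
    assert (Hbox := area_box alg (sq alg B M) B HP (good_star _ G) ltac:(lia) ltac:(lia)).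
    rewrite L in Hbox.
    pose proof (final_bound alg B Valg M Hbox ltac:(lia)) as F.
    rewrite box_len in F.
    assert (P1 : (1 <= 2 ^ k)%nat) by (apply Nat.neq_0_lt_0, Nat.pow_nonzero; lia).
    assert (E1 : Z.to_nat (2 * B + 1) = (2 * 2 ^ k + 1)%nat) by (unfold B; lia).
    rewrite E1 in F.
    assert (P2 : (2 ^ (k + (k + 5)) <= 2 ^ M)%nat) by (apply Nat.pow_le_mono_r; lia).
    rewrite !Nat.pow_add_r in P2. simpl (2 ^ 5)%nat in P2.
    nia. }
  assert (R1 : Rpower 2 (INR n / 2) <= 2 ^ (k + 4)).
  { rewrite <- Rpower_pow by lra. apply Rle_Rpower; [lra|].
    assert (INR n <= INR (2 * (k + 4))) by (apply le_INR; lia).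
    rewrite mult_INR in H. simpl (INR 2) in H. lra. }
  assert (R2 : 2 ^ (k + 4) = 16 * 2 ^ k) by (rewrite pow_add; simpl; ring).
  assert (R3 : IZR B = 2 ^ k).
  { unfold B. rewrite <- INR_IZR_INZ, pow_INR. simpl (INR 2). f_equal. }
  apply IZR_lt in HA. lra.
Qed.
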